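(* Let $\vec{G}$ be a finite directed rooted tree in which every edge is directed away from the root. Then $\operatorname{adim}(\vec{G}) = \operatorname{bdim}(\vec{G})$.
   Context: For a finite simple directed graph $\vec{G}$ and $u,v\in V(\vec{G})$, $d(u,v)$ is the length of a shortest directed path from $u$ to $v$, or $\infty$ if none exists; for a nonnegative integer $k$, $d_k(u,v)=\min(d(u,v),k+1)$. A function $f:V(\vec{G})\to\mathbb{Z}_{\geq 0}$ is a resolving broadcast if for any distinct $x,y\in V(\vec{G})$ there is $z$ with $f(z)>0$ and $d_{f(z)}(z,x)\neq d_{f(z)}(z,y)$. The broadcast dimension $\operatorname{bdim}(\vec{G})$ is the minimum of $\sum_{v}f(v)$ over all resolving broadcasts $f$. A set $A\subseteq V(\vec{G})$ is an adjacency resolving set if for any distinct $x,y$ there is $z\in A$ with $d_1(z,x)\neq d_1(z,y)$; the adjacency dimension $\operatorname{adim}(\vec{G})$ is the minimum cardinality of such a set (equivalently, the minimum of $\sum_v f(v)$ over resolving broadcasts with values in $\{0,1\}$). *)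

(* Defs.v *)
From mathcomp Require Import all_boot.
Set Implicit Arguments. Unset Strict Implicit. Unset Printing Implicit Defensive.

Section Digraph.
Variables (T : finType) (e : rel T).

(* simple digraph: no loops (multi-edges impossible with a relation) *)
Definition simple_digraph : Prop := irreflexive e.

Definition walkn (n : nat) (u v : T) : bool :=
  [exists p : n.-tuple T, path e u p && (last u p == v)].

(* d_k(u,v) = min(d(u,v), k+1), where d(u,v) is the length of a shortest
   directed walk (= shortest directed path) from u to v, or infinity. *)
Definition dk (k : nat) (u v : T) : nat :=
  head k.+1 [seq n <- iota 0 k.+1 | walkn n u v].

(* directed rooted tree with every edge directed away from the root
   (out-arborescence): there is a root r such that every vertex v is reached
   by exactly one directed walk from r. *)
Definition out_tree_rooted_at (r : T) : Prop :=
  forall v : T, exists! p : seq T, path e r p && (last r p == v).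

Definition out_tree : Prop := exists r : T, out_tree_rooted_at r.

Definition resolving_broadcast (f : T -> nat) : Prop :=
  forall x y : T, x != y ->
    exists z : T, 0 < f z /\ dk (f z) z x != dk (f z) z y.

Definition adjacency_resolving (A : {set T}) : Prop :=
  forall x y : T, x != y ->
    exists2 z : T, z \in A & dk 1 z x != dk 1 z y.

Definition is_bdim (n : nat) : Prop :=
  (exists f : T -> nat, resolving_broadcast f /\ \sum_(v : T) f v = n) /\
  (forall f : T -> nat, resolving_broadcast f -> n <= \sum_(v : T) f v).

Definition is_adim (n : nat) : Prop :=
  (exists A : {set T}, adjacency_resolving A /\ #|A| = n) /\
  (forall A : {set T}, adjacency_resolving A -> n <= #|A|).

End Digraph.

(* Main.v *)
Require Import Defs.
From mathcomp Require Import all_boot.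
From mathcomp Require Import zify.
Set Implicit Arguments. Unset Strict Implicit. Unset Printing Implicit Defensive.

Section Tree.
Variables (T : finType) (e : rel T) (r : T).
Hypothesis ht : out_tree_rooted_at e r.

Lemma walknP n u v :
  reflect (exists p, [/\ size p = n, path e u p & last u p = v]) (walkn e n u v).
Proof.
apply: (iffP existsP) => [[p /andP[pp /eqP lp]] | [p [sz pp lp]]].
  by exists (val p); split => //; exact: size_tuple.
have H : size p == n by apply/eqP.
by exists (Tuple H); rewrite /= pp lp eqxx.
Qed.

Lemma walkn0 u v : walkn e 0 u v = (u == v).
Proof.
apply/walknP/eqP => [[p [/size0nil -> _ <-]] //| <-].
by exists [::].
Qed.

Lemma walkn1 u v : walkn e 1 u v = e u v.
Proof.
apply/walknP/idP => [[[|a [|b p]] [//= _ ]] | H].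
  by rewrite andbT => H <-.
by exists [:: v]; rewrite /= H.
Qed.

Lemma walkn_cat a b u v y : walkn e a u v -> walkn e b v y -> walkn e (a + b) u y.
Proof.
move=> /walknP[p [sp pp lp]] /walknP[q [sq pq lq]]; apply/walknP.
exists (p ++ q); rewrite size_cat cat_path last_cat lp pp pq sp sq; by split.
Qed.

Lemma rw_uniq p q : path e r p -> path e r q -> last r p = last r q -> p = q.
Proof.
move=> pp pq l.
have [p0 [_ U]] := ht (last r p).
by rewrite -(U p) ?pp ?eqxx // -(U q) ?pq ?l ?eqxx.
Qed.

Lemma rw_ex v : exists p, path e r p /\ last r p = v.
Proof. by have [p0 [/andP[pp /eqP lp] _]] := ht v; exists p0. Qed.

Lemma par_uniq a b v : e a v -> e b v -> a = b.
Proof.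
move=> ha hb.
have [pa [ppa lpa]] := rw_ex a; have [pb [ppb lpb]] := rw_ex b.
have E : rcons pa v = rcons pb v.
  by apply: rw_uniq; rewrite ?rcons_path ?last_rcons ?ppa ?ppb ?lpa ?lpb ?ha ?hb.
have Eab : pa = pb by apply: (@rcons_injl _ v).
by rewrite -lpa -lpb Eab.
Qed.

Lemma walk_len a b u v : walkn e a u v -> walkn e b u v -> a = b.
Proof.
move=> /walknP[q1 [s1 p1 l1]] /walknP[q2 [s2 p2 l2]].
have [p [pp lp]] := rw_ex u.
have E : p ++ q1 = p ++ q2.
  by apply: rw_uniq; rewrite ?cat_path ?last_cat ?pp ?lp ?p1 ?p2 ?l1 ?l2.
have : q1 = q2 by rewrite -(drop_size_cat q1 (erefl (size p))) E drop_size_cat.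
by move=> Eq; rewrite -s1 -s2 Eq.
Qed.

Lemma walk_anc m m' w w' x : walkn e m w x -> walkn e m' w' x -> m <= m' ->
  walkn e (m' - m) w' w.
Proof.
move=> /walknP[q [sq pq lq]] /walknP[q' [sq' pq' lq']] le.
have [p1 [pp1 lp1]] := rw_ex w'; have [p2 [pp2 lp2]] := rw_ex w.
have E : p1 ++ q' = p2 ++ q.
  by apply: rw_uniq; rewrite ?cat_path ?last_cat ?pp1 ?pp2 ?lp1 ?lp2 ?pq ?pq' ?lq ?lq'.
have Hs : size p1 + m' = size p2 + m by rewrite -sq -sq' -!size_cat E.
have le1 : size p1 <= size p2 by lia.
have Ht : take (size p1) p2 = p1.
  by rewrite -(takel_cat q le1) -E take_size_cat.
apply/walknP; exists (drop (size p1) p2); split.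
- rewrite size_drop; lia.
- by move: pp2; rewrite -{1}(cat_take_drop (size p1) p2) cat_path Ht lp1 => /andP[].
- by move: lp2; rewrite -{1}(cat_take_drop (size p1) p2) last_cat Ht lp1.
Qed.

Lemma dk_le k u v : dk e k u v <= k.+1.
Proof.
rewrite /dk; case E: [seq n <- iota 0 k.+1 | walkn e n u v] => [|a s] //=.
have : a \in [seq n <- iota 0 k.+1 | walkn e n u v] by rewrite E mem_head.
by rewrite mem_filter mem_iota => /andP[_ /andP[_]]; rewrite add0n => /ltnW.
Qed.

Lemma dk_walk k u v : dk e k u v <= k -> walkn e (dk e k u v) u v.
Proof.
rewrite /dk; case E: [seq n <- iota 0 k.+1 | walkn e n u v] => [|a s] /=.
  by rewrite ltnn.
have : a \in [seq n <- iota 0 k.+1 | walkn e n u v] by rewrite E mem_head.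
by rewrite mem_filter => /andP[].
Qed.

Lemma dk_eq k m u v : walkn e m u v -> m <= k -> dk e k u v = m.
Proof.
move=> wm mk.
have : m \in [seq n <- iota 0 k.+1 | walkn e n u v].
  by rewrite mem_filter wm mem_iota /= add0n ltnS.
rewrite /dk; case E: [seq n <- iota 0 k.+1 | walkn e n u v] => [|a s] //= _.
have : a \in [seq n <- iota 0 k.+1 | walkn e n u v] by rewrite E mem_head.
rewrite mem_filter => /andP[wa _].
exact: walk_len wa wm.
Qed.

Lemma dk1 u v : dk e 1 u v = if u == v then 0 else if e u v then 1 else 2.
Proof.
by rewrite /dk /= walkn0 walkn1; case: (u == v); case: (e u v).
Qed.

End Tree.

Section Main.
Variables (T : finType) (e : rel T) (r : T).
Hypothesis ht : out_tree_rooted_at e r.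
Variable f : T -> nat.
Hypothesis hres : resolving_broadcast e f.

Definition rb w x m := (0 < f w) && (m <= f w) && walkn e m w x.
Definition near w x m :=
  rb w x m && [forall w' : T, forall m' : 'I_m, ~~ rb w' x m'].
Definition tok := {w : T & 'I_(f w)}.
Definition lev (i : nat) := if i == 0 then 0 else i.+1.
Definition Q (t : tok) x := near (tag t) x (lev (tagged t)).
Definition Aset := [set x | [exists t, Q t x]].

Lemma near_dk w m x y w' : near w x m -> near w y m -> 0 < f w' ->
  dk e (f w') w' x <= f w' -> dk e (f w') w' y = dk e (f w') w' x.
Proof.
move=> /andP[/andP[/andP[_ _] wx] nx] /andP[/andP[_ wy] _] fp dle.
set m' := dk e (f w') w' x in dle *.
have wx' : walkn e m' w' x by exact: dk_walk.
have mm : m <= m'.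
  rewrite leqNgt; apply/negP => lt.
  move/forallP: nx => /(_ w') /forallP /(_ (Ordinal lt)) /=.
  by rewrite /rb fp dle wx'.
have := walk_anc ht wx wx' mm => a.
have := walkn_cat a wy; rewrite subnK // => wy'.
move: wy' dle; clearbody m' => wy' dle; exact: (dk_eq ht wy' dle).
Qed.

Lemma near_uniq w m x y : near w x m -> near w y m -> x = y.
Proof.
move=> nx ny; case: (eqVneq x y) => // /hres [w' [fp]].
case: (leqP (dk e (f w') w' x) (f w')) => [le|lt].
  by rewrite (near_dk nx ny fp le) eqxx.
case: (leqP (dk e (f w') w' y) (f w')) => [le'|lt'].
  by rewrite (near_dk ny nx fp le') eqxx.
have := dk_le e (f w') w' x; have := dk_le e (f w') w' y.
move=> h1 h2; have -> : dk e (f w') w' x = (f w').+1 by apply/eqP; rewrite eqn_leq h2 lt.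
have -> : dk e (f w') w' y = (f w').+1 by apply/eqP; rewrite eqn_leq h1 lt'.
by rewrite eqxx.
Qed.

Lemma unreached_uniq x y : (forall w m, ~~ rb w x m) -> (forall w m, ~~ rb w y m) -> x = y.
Proof.
move=> ux uy; case: (eqVneq x y) => // /hres [w' [fp]].
case: (leqP (dk e (f w') w' x) (f w')) => [le|lt].
  by have := ux w' (dk e (f w') w' x); rewrite /rb fp le dk_walk.
case: (leqP (dk e (f w') w' y) (f w')) => [le'|lt'].
  by have := uy w' (dk e (f w') w' y); rewrite /rb fp le' dk_walk.
have := dk_le e (f w') w' x; have := dk_le e (f w') w' y.
move=> h1 h2; have -> : dk e (f w') w' x = (f w').+1 by apply/eqP; rewrite eqn_leq h2 lt.
have -> : dk e (f w') w' y = (f w').+1 by apply/eqP; rewrite eqn_leq h1 lt'.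
by rewrite eqxx.
Qed.

Lemma self_in w : 0 < f w -> w \in Aset.
Proof.
move=> fp; rewrite inE; apply/existsP; exists (Tagged (fun w => 'I_(f w)) (Ordinal fp)).
rewrite /Q /= /lev /= /near /rb fp /= walkn0 eqxx /=.
by apply/forallP => w'; apply/forallP => -[].
Qed.

Lemma classify x : x \notin Aset ->
  (forall w m, ~~ rb w x m) \/ exists w, near w x 1.
Proof.
move=> xA.
case: (boolP [exists w, exists m : 'I_(f w).+1, rb w x m]) => [H|H]; last first.
  left => w m; apply/negP => R; move/negP: H; apply; apply/existsP; exists w.
  have lt : m < (f w).+1 by move: R => /andP[/andP[_ ?] _].
  by apply/existsP; exists (Ordinal lt).
right.
have ex : exists m, [exists w, rb w x m].
  case/existsP: H => w /existsP[m R]; exists m; apply/existsP; by exists w.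
case: (ex_minnP ex) => m /existsP[w R] mmin.
have near_m : near w x m.
  rewrite /near R /=; apply/forallP => w'; apply/forallP => m'; apply/negP => R'.
  have := mmin m' (introT existsP (ex_intro _ w' R')).
  by rewrite leqNgt ltn_ord.
move: (R) => /andP[/andP[fp mle] _].
case: m mmin near_m mle R => [|[|m]] mmin nm mle R.
- move/negP: xA; case; rewrite inE; apply/existsP.
  exists (Tagged (fun w => 'I_(f w)) (Ordinal fp)); by rewrite /Q /=.
- by exists w.
- move/negP: xA; case; rewrite inE; apply/existsP.
  have lt : m.+1 < f w by [].
  exists (Tagged (fun w => 'I_(f w)) (Ordinal lt)); by rewrite /Q /=.
Qed.

Lemma near1_par w x : near w x 1 -> (0 < f w) && e w x.
Proof. by move=> /andP[/andP[/andP[-> _]]]; rewrite walkn1. Qed.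

Lemma A_adj : adjacency_resolving e Aset.
Proof.
move=> x y xy.
case: (boolP (x \in Aset)) => xA.
  exists x => //; rewrite !dk1 eqxx (negbTE xy); by case: (e x y).
case: (boolP (y \in Aset)) => yA.
  have yx : y != x by rewrite eq_sym.
  exists y => //; rewrite !dk1 eqxx (negbTE yx); by case: (e y x).
have Hw : forall w x y, x \notin Aset -> y \notin Aset -> near w x 1 ->
   ((forall w m, ~~ rb w y m) \/ exists w', near w' y 1 /\ w' != w) ->
   exists2 z, z \in Aset & dk e 1 z x != dk e 1 z y.
  move=> w x0 y0 xA0 yA0 nx hy.
  have /andP[fp ex] := near1_par nx.
  have wA := self_in fp.
  exists w => //.
  have wx : w != x0 by apply/eqP => E; rewrite -E wA in xA0.
  have wy : w != y0 by apply/eqP => E; rewrite -E wA in yA0.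
  rewrite !dk1 (negbTE wx) (negbTE wy) ex.
  case: hy => [uy | [w' [ny ne]]].
    case E: (e w y0) => //.
    by have := uy w 1; rewrite /rb fp walkn1 E /=; case: (f w) fp.
  have /andP[_ ey] := near1_par ny.
  case E: (e w y0) => //.
  by rewrite (par_uniq ht E ey) eqxx in ne.
case: (classify xA) => [ux|[w nx]]; case: (classify yA) => [uy|[w' ny]].
- by rewrite (unreached_uniq ux uy) eqxx in xy.
- have [z zA hz] := Hw w' y x yA xA ny (or_introl ux).
  by exists z => //; rewrite eq_sym.
- exact: Hw w x y xA yA nx (or_introl uy).
- case: (eqVneq w' w) => [E|ne].
    by rewrite E in ny; rewrite (near_uniq nx ny) eqxx in xy.
  by apply: Hw nx _ => //; right; exists w'.
Qed.

Lemma A_card : #|Aset| <= \sum_v f v.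
Proof.
pose h x := [pick t | Q t x].
have inj : {in Aset &, injective h}.
  move=> x y; rewrite !inE => /existsP[t0 Qx] /existsP[t1 Qy].
  rewrite /h; case: pickP => [t Qt|/(_ t0)]; last by rewrite Qx.
  case: pickP => [t' Qt'|/(_ t1)]; last by rewrite Qy.
  move=> [E]; rewrite E in Qt.
  exact: near_uniq Qt Qt'.
rewrite -(card_in_imset inj).
have sub : h @: Aset \subset [set Some t | t in [set: tok]].
  apply/subsetP => y /imsetP[x]; rewrite inE => /existsP[t0 Qx] ->.
  rewrite /h; case: pickP => [t Qt|/(_ t0)]; last by rewrite Qx.
  by apply/imsetP; exists t; rewrite ?inE.
apply: (leq_trans (subset_leq_card sub)).
rewrite card_imset; last by move=> ? ? [].
rewrite cardsT card_tagged sumnE big_map big_enum /=.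
by apply: leq_sum => i _; rewrite card_ord.
Qed.

End Main.

Definition adjb (T : finType) (e : rel T) (A : {set T}) :=
  [forall x, forall y, (x != y) ==> [exists z in A, dk e 1 z x != dk e 1 z y]].

Lemma adjbP (T : finType) (e : rel T) (A : {set T}) :
  reflect (adjacency_resolving e A) (adjb e A).
Proof.
apply: (iffP forallP) => [H x y xy | H x].
  move/forallP: (H x) => /(_ y); rewrite xy /= => /existsP[z /andP[zA d]].
  by exists z.
apply/forallP => y; apply/implyP => /H [z zA d]; apply/existsP; exists z; by rewrite zA.
Qed.

Theorem theorem1p14 (T : finType) (e : rel T) :
  simple_digraph e -> out_tree e ->
  exists n : nat, is_adim e n /\ is_bdim e n.
Proof.
move=> _ [r ht].
have ex : exists n, [exists A : {set T}, adjb e A && (#|A| == n)].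
  exists #|[set: T]|; apply/existsP; exists setT; rewrite eqxx andbT.
  apply/adjbP => x y xy; exists x; first by rewrite inE.
  rewrite !dk1 eqxx (negbTE xy); by case: (e x y).
case: (ex_minnP ex) => n /existsP[A /andP[/adjbP adjA /eqP cA]] nmin.
have minA : forall B : {set T}, adjacency_resolving e B -> n <= #|B|.
  move=> B /adjbP aB; apply: nmin; apply/existsP; exists B; by rewrite aB eqxx.
exists n; split; first by split => //; exists A.
split.
  exists (fun v => nat_of_bool (v \in A)); split.
    move=> x y /adjA [z zA d]; exists z; by rewrite zA.
  rewrite -cA -sum1_card [RHS]big_mkcond; apply: eq_bigr => i _; by case: (i \in A).
move=> f hf.
have aA : adjacency_resolving e (Aset e f) := @A_adj _ _ _ ht _ hf.
apply: (leq_trans (minA _ aA)).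
exact: (A_card ht hf).
Qed.
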